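(* Let $d\ge 1$ and let $X$ be a minimal $\mathbb{Z}^d$-subshift of finite type. Then $\overline{D}_h(X)\le d-1$.
   Context: A subshift of $\mathcal A^{\mathbb Z^d}$ ($\mathcal A$ finite) is a closed shift-invariant set; it is of finite type if it is the set of configurations avoiding a finite set of forbidden patterns. $X$ is minimal if every pattern appearing in some configuration of $X$ appears in every configuration of $X$. $N_n(X)$ is the number of patterns on support $\llbracket 1,n\rrbracket^d$ appearing in $X$, and the upper entropy dimension is $\overline D_h(X)=\limsup_n \frac{\log_2\log_2 N_n(X)}{\log_2 n}$. *)

(* Defs.v *)
From HB Require Import structures.
From mathcomp Require Import all_boot all_order all_algebra.
From Stdlib Require Import Reals ClassicalDescription.

Set Implicit Arguments. Unset Strict Implicit. Unset Printing Implicit Defensive.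

Definition pos (d : nat) := {ffun 'I_d -> int}.
Definition padd d (u v : pos d) : pos d := [ffun i => GRing.add (u i) (v i)].

Definition config (A : finType) (d : nat) := pos d -> A.

Record pattern (A : finType) (d : nat) := Pattern {
  psupp : seq (pos d);
  psym : pos d -> A }.

Definition appears A d (P : pattern A d) (x : config A d) : Prop :=
  exists v : pos d, forall u, u \in psupp P -> x (padd u v) = psym P u.

Definition is_SFT A d (X : config A d -> Prop) : Prop :=
  exists F : seq (pattern A d),
    forall x, X x <-> (forall P, List.In P F -> ~ appears P x).

Definition minimal A d (X : config A d -> Prop) : Prop :=
  forall P : pattern A d, (exists x, X x /\ appears P x) ->
    forall y, X y -> appears P y.

Definition asb (P : Prop) : bool :=
  if excluded_middle_informative P then true else false.

(* the box [[1,n]]^d, indexed by {ffun 'I_d -> 'I_n} (coordinate b i + 1) *)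
Definition box (d n : nat) := {ffun 'I_d -> 'I_n}.
Definition box_emb d n (b : box d n) : pos d := [ffun i => Posz (b i).+1].

Definition Npat A d (X : config A d -> Prop) (n : nat) : nat :=
  #|[set p : {ffun box d n -> A} |
      asb (exists x, X x /\ exists v : pos d,
             forall b : box d n, x (padd (box_emb b) v) = p b)]|.

Definition log2 (x : R) : R := (ln x / ln 2)%R.

Definition limsup_le (u : nat -> R) (L : R) : Prop :=
  forall eps : R, (0 < eps)%R -> exists N : nat, forall n : nat,
    (N <= n)%N -> (u n <= L + eps)%R.

Definition upper_entropy_dim_le A d (X : config A d -> Prop) (D : R) : Prop :=
  limsup_le (fun n => (log2 (log2 (INR (Npat X n))) / log2 (INR n))%R) D.

(* Main.v *)
Require Import Defs.
From mathcomp Require Import all_boot.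
From Stdlib Require Import Reals.
From HB Require Import structures.
From mathcomp Require all_order all_algebra zify.
From Stdlib Require ClassicalDescription Classical ClassicalEpsilon FunctionalExtensionality Lra Lia ZArith.

Module H1.
Import all_boot all_order all_algebra zify.
Import Reals ClassicalDescription Classical ClassicalEpsilon FunctionalExtensionality.
Import Defs.
Set Implicit Arguments. Unset Strict Implicit. Unset Printing Implicit Defensive.
Import Order.TTheory GRing.Theory Num.Theory.
Local Open Scope ring_scope.

Section Core.
Variable d : nat.

Definition psub (u v : pos d) : pos d := [ffun i => (u i - v i)].

Lemma paddE (u v : pos d) i : padd u v i = u i + v i. Proof. by rewrite ffunE. Qed.
Lemma psubE (u v : pos d) i : psub u v i = u i - v i. Proof. by rewrite ffunE. Qed.

Lemma padd_psub u v : padd (psub u v) v = u.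
Proof. by apply/ffunP=> i; rewrite paddE psubE subrK. Qed.

Lemma psub_padd u v : psub (padd u v) v = u.
Proof. by apply/ffunP=> i; rewrite psubE paddE addrK. Qed.

Lemma paddA (u v w : pos d) : padd (padd u v) w = padd u (padd v w).
Proof. by apply/ffunP=> i; rewrite !paddE addrA. Qed.

Lemma padd0 (u : pos d) : padd u [ffun=> 0] = u.
Proof. by apply/ffunP=> i; rewrite paddE ffunE addr0. Qed.

Definition ltlex (u v : pos d) : Prop :=
  exists i : 'I_d, (u i < v i) /\ forall j : 'I_d, (val j < val i)%nat -> u j = v j.

Lemma ltlex_irr u : ~ ltlex u u.
Proof. by case=> i [h _]; rewrite ltxx in h. Qed.

Lemma ltlex_trans u v w : ltlex u v -> ltlex v w -> ltlex u w.
Proof.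
case=> i [hi ei] [j [hj ej]].
case: (ltngtP i j) => hij.
- exists i; split; first by rewrite (ej i hij) in hi.
  move=> k hk; rewrite ei // ej //; exact: ltn_trans hk hij.
- exists j; split; first by rewrite (ei j hij).
  move=> k hk; rewrite ei ?ej //; exact: ltn_trans hk hij.
- have eij : i = j by apply: val_inj.
  subst j; exists i; split; first exact: lt_trans hi hj.
  by move=> k hk; rewrite ei ?ej.
Qed.

Lemma ltlex_total u v : u <> v -> ltlex u v \/ ltlex v u.
Proof.
move=> neq.
have [i hi] : exists i : 'I_d, u i != v i.
  apply/existsP; apply: contraT; rewrite negb_exists => /forallP h.
  by case: neq; apply/ffunP=> i; apply/eqP; move: (h i); rewrite negbK.
pose P := fun k => [exists j : 'I_d, (nat_of_ord j == k) && (u j != v j)].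
have exP : exists k, P k by exists (val i); apply/existsP; exists i; rewrite eqxx hi.
pose k := ex_minn exP.
have [j /andP[/eqP ej nj]] : exists j : 'I_d, (nat_of_ord j == k) && (u j != v j).
  by apply/existsP; rewrite /k; case: ex_minnP.
have minj : forall l : 'I_d, (val l < val j)%nat -> u l = v l.
  move=> l hl; apply/eqP; apply: contraT => nl.
  have Pl : P (val l) by apply/existsP; exists l; rewrite eqxx nl.
  move: hl; change (val j) with (nat_of_ord j); rewrite ej /k; case: ex_minnP => m _ hm.
  by move/(_ _ Pl): hm; rewrite leqNgt => /negbTE ->.
case: (ltgtP (u j) (v j)) => h.
- by left; exists j.
- by right; exists j; split=> // l hl; rewrite minj.
- by rewrite h eqxx in nj.
Qed.

Lemma ltlex_shift (u v w : pos d) : ltlex u v -> ltlex (padd u w) (padd v w).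
Proof.
case=> i [hi ei]; exists i; split; first by rewrite !ffunE ltrD2r.
by move=> j hj; rewrite !ffunE ei.
Qed.

Lemma ltlex_unshift (u v w : pos d) : ltlex (padd u w) (padd v w) -> ltlex u v.
Proof.
move/(ltlex_shift (psub [ffun=> 0] w)).
have H : forall z, padd (padd z w) (psub [ffun=> 0] w) = z.
  by move=> z; apply/ffunP=> l; rewrite !paddE psubE ffunE sub0r addrK.
by rewrite !H.
Qed.

Lemma seq_min (s : seq (pos d)) (Pp : pos d -> Prop) :
  (exists u, u \in s /\ Pp u) ->
  exists u, [/\ u \in s, Pp u & forall u', u' \in s -> Pp u' -> ~ ltlex u' u].
Proof.
elim: s => [|a s IH] [u [hu pu]]; first by [].
have [H|H] := classic (exists u, u \in s /\ Pp u).
- case: (IH H) => m [ms pm mm].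
  have [ltam|nlt] := classic (ltlex a m /\ Pp a).
  + exists a; split; [by rewrite inE eqxx | by case: ltam |].
    move=> u' ; rewrite inE => /orP[/eqP ->|us] pu'; first exact: ltlex_irr.
    move=> h; apply: (mm u' us pu'); exact: ltlex_trans h (proj1 ltam).
  + exists m; split; [by rewrite inE ms orbT | by [] |].
    move=> u'; rewrite inE => /orP[/eqP ->|us] pu'; last exact: mm.
    by move=> h; apply: nlt.
- exists a.
  have ua : u = a.
    move: hu; rewrite inE => /orP[/eqP //|us]; by case: H; exists u.
  subst u; split; [by rewrite inE eqxx| by [] |].
  move=> u'; rewrite inE => /orP[/eqP ->|us] pu'; first exact: ltlex_irr.
  by case: H; exists u'.
Qed.

Definition inbox (m : nat) (u : pos d) : bool := [forall i, (absz (u i) <= m)%nat].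

Lemma inbox_mono m m' u : (m <= m')%nat -> inbox m u -> inbox m' u.
Proof. by move=> h /forallP H; apply/forallP=> i; exact: leq_trans (H i) h. Qed.

Definition nrm (u : pos d) : nat := \max_(i : 'I_d) absz (u i).

Lemma inbox_nrm u : inbox (nrm u) u.
Proof. apply/forallP=> i; exact: (leq_bigmax i). Qed.

Lemma inbox_seq m : exists s : seq (pos d), forall u, inbox m u -> u \in s.
Proof.
exists [seq [ffun i => ((t i)%:Z - m%:Z)] | t : {ffun 'I_d -> 'I_(m + m).+1}].
move=> u /forallP hu.
apply/mapP; exists [ffun i => inord (absz (u i + m%:Z))]; first by rewrite ?mem_enum.
have h1 : forall (a : int), (absz a <= m)%nat -> leq (absz (a + m%:Z)).+1 (m + m)%nat.+1 by move=> a; lia.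
have h2 : forall (a : int), (absz a <= m)%nat -> ((absz (a + m%:Z))%:Z - m%:Z) = a by move=> a; lia.
apply/ffunP=> i; rewrite !ffunE inordK; [by rewrite h2 | exact: h1].
Qed.

Lemma seq_inbox (s : seq (pos d)) : exists m, forall u, u \in s -> inbox m u.
Proof.
elim: s => [|a s [m hm]]; first by exists 0%nat.
exists (maxn m (nrm a)) => u; rewrite inE => /orP[/eqP ->|us].
- apply: inbox_mono (inbox_nrm a); exact: leq_maxr.
- apply: inbox_mono (hm _ us); exact: leq_maxl.
Qed.

End Core.


Definition occurs A d (P : pattern A d) (y : config A d) (v : pos d) : Prop :=
  forall u, u \in psupp P -> y (padd u v) = psym P u.

Section Compact.
Variables (A : finType) (d : nat) (X : config A d -> Prop).
Variable F : seq (pattern A d).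
Hypothesis HF : forall x, X x <-> (forall P, List.In P F -> ~ appears P x).
Variable P : pattern A d.

Definition Good (R : pos d -> bool) (p : config A d) :=
  forall N, exists y, [/\ X y, (forall v, inbox N v -> ~ occurs P y v) &
                          forall u, R u -> y u = p u].

Lemma step (R R' : pos d -> bool) (s : seq (pos d)) (hs : forall u, R' u -> u \in s)
  p : Good R p -> exists p', (forall u, R u -> p' u = p u) /\ Good R' p'.
Proof.
move=> G.
pose a0 := p [ffun=> 0].
pose ext (q : (size s).-tuple A) : config A d :=
  fun u => if R' u then nth a0 q (index u s) else p u.
apply: NNPP => H.
have HN : forall q, exists N, forall y, X y -> (forall v, inbox N v -> ~ occurs P y v) ->
   (forall u, R' u -> y u = ext q u) -> (forall u, R u -> ext q u = p u) -> False.
  move=> q.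
  have [ag|nag] := classic (forall u, R u -> ext q u = p u); last first.
    by exists 0%nat => y _ _ _ /nag.
  have nG : ~ Good R' (ext q) by move=> g; apply: H; exists (ext q).
  apply: NNPP => nex; apply: nG => N.
  apply: NNPP => ny; apply: nex; exists N => y Xy av ag' _.
  by apply: ny; exists y.
pose Nf q := proj1_sig (constructive_indefinite_description _ (HN q)).
have Nfs q := proj2_sig (constructive_indefinite_description _ (HN q)).
pose Nmax := (\max_(q : (size s).-tuple A) Nf q)%nat.
case: (G Nmax) => y [Xy av ag].
pose q0 := map_tuple y (in_tuple s).
have e0 : forall u, R' u -> ext q0 u = y u.
  move=> u hu; rewrite /ext hu /= (nth_map u); last by rewrite index_mem hs.
  by rewrite nth_index // hs.
apply: (Nfs q0 y Xy).
- move=> v hv; apply: av; apply: inbox_mono hv; exact: (leq_bigmax q0).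
- by move=> u hu; rewrite e0.
- move=> u hu; rewrite /ext; case: ifP => hu' //.
  by rewrite -ag // -e0 // /ext hu'.
Qed.

Definition cov m := proj1_sig (constructive_indefinite_description _ (inbox_seq d m)).
Lemma covP m u : inbox m u -> u \in cov m.
Proof. exact: (proj2_sig (constructive_indefinite_description _ (inbox_seq d m))). Qed.

Definition step_sig R R' s hs p (G : Good R p) :
  {p' | (forall u, R u -> p' u = p u) /\ Good R' p'} :=
  constructive_indefinite_description _ (@step R R' s hs p G).

Variables (p0 : config A d) (G0 : Good pred0 p0).

Fixpoint chain (m : nat) : {p | Good (inbox m) p} :=
  match m with
  | 0%nat => let: exist p' h := @step_sig pred0 (inbox 0) (cov 0) (@covP 0) p0 G0 in
             exist _ p' (proj2 h)
  | m'.+1 => let: exist p hp := chain m' in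
             let: exist p' h := @step_sig (inbox m') (inbox m'.+1) (cov m'.+1) (@covP m'.+1) p hp in
             exist _ p' (proj2 h)
  end.

Lemma chain_agree m u : inbox m u -> sval (chain m.+1) u = sval (chain m) u.
Proof.
rewrite /=; case: (chain m) => p hp /=.
by case: (step_sig _ _) => p' [h1 h2] /= hu; apply: h1.
Qed.

Lemma chain_agree2 m m' u : (m <= m')%nat -> inbox m u ->
  sval (chain m') u = sval (chain m) u.
Proof.
elim: m' => [|m' IH]; first by rewrite leqn0 => /eqP ->.
rewrite leq_eqVlt => /orP[/eqP -> //|hm] hu.
rewrite chain_agree ?IH //; exact: inbox_mono hu.
Qed.

Definition ylim : config A d := fun u => sval (chain (nrm u)) u.

Lemma ylimP m u : inbox m u -> ylim u = sval (chain m) u.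
Proof.
move=> hu; rewrite /ylim -(@chain_agree2 (nrm u) (maxn m (nrm u)) u (leq_maxr _ _) (inbox_nrm u)).
by rewrite (@chain_agree2 m) ?leq_maxl.
Qed.

Lemma ylim_X : X ylim.
Proof.
apply/HF => P0 inF [v occ].
case: (seq_inbox [seq padd u v | u <- psupp P0]) => m hm.
case: (proj2_sig (chain m) 0%nat) => y [Xy _ ag].
move/HF: Xy => /(_ P0 inF); apply; exists v => u hu.
have hin : inbox m (padd u v) by apply: hm; apply/mapP; exists u.
by rewrite ag // -ylimP // occ.
Qed.

Lemma ylim_avoid : ~ appears P ylim.
Proof.
case=> v occ.
case: (seq_inbox [seq padd u v | u <- psupp P]) => m0 hm.
pose m := maxn m0 (nrm v).
case: (proj2_sig (chain m) m) => y [Xy av ag].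
apply: (av v); first by apply: inbox_mono (inbox_nrm v); exact: leq_maxr.
move=> u hu.
have hin : inbox m (padd u v).
  by apply: inbox_mono (leq_maxl m0 (nrm v)) _; apply: hm; apply/mapP; exists u.
by rewrite ag // -ylimP // occ.
Qed.

End Compact.

Lemma compactness (A : finType) (d : nat) (X : config A d -> Prop) (F : seq (pattern A d))
  (HF : forall x, X x <-> (forall P, List.In P F -> ~ appears P x)) (P : pattern A d) :
  (forall N, exists y, X y /\ forall v, inbox N v -> ~ occurs P y v) ->
  exists y, X y /\ ~ appears P y.
Proof.
move=> H.
case: (H 0%nat) => y0 _.
have G0 : Good X P pred0 y0.
  by move=> N; case: (H N) => y [Xy av]; exists y; split.
exists (ylim G0); split; [exact: ylim_X | exact: ylim_avoid].
Qed.


Lemma asbP (P : Prop) : asb P = true <-> P.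
Proof. unfold asb; destruct (ClassicalDescription.excluded_middle_informative P) as [p|np]; simpl; split; intros h; auto; discriminate. Qed.

Lemma fin_max (T : finType) (S : T -> Prop) (lt : T -> T -> Prop) :
  (forall t, ~ lt t t) -> (forall a b c, lt a b -> lt b c -> lt a c) ->
  (exists t, S t) -> exists t, S t /\ forall t', S t' -> ~ lt t t'.
Proof.
move=> irr tr [t St].
pose f t := #|[set t' | asb (S t' /\ lt t t')]|.
suff H : forall k t, (f t < k)%nat -> S t -> exists t, S t /\ forall t', S t' -> ~ lt t t'.
  exact: (H (f t).+1 t).
elim=> [//|k IH] t0 hk S0.
have [H|H] := classic (exists t', S t' /\ lt t0 t'); last first.
  by exists t0; split=> // t' St' l; apply: H; exists t'.
case: H => t' [St' l]; apply: (IH t') => //.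
rewrite -ltnS; apply: leq_trans hk; apply: proper_card; apply/properP; split.
- apply/subsetP=> z; rewrite !inE => /asbP [Sz lz]; apply/asbP; split=> //; exact: tr lz.
- exists t'; rewrite !inE; first by apply/asbP.
  by apply/negP => /asbP [_ /irr].
Qed.

Lemma shift_X A d (X : config A d -> Prop) (F : seq (pattern A d))
  (HF : forall x, X x <-> (forall P, List.In P F -> ~ appears P x)) x v :
  X x -> X (fun u => x (padd u v)).
Proof.
move=> /HF Xx; apply/HF => P0 inF [w hw]; apply: (Xx P0 inF).
by exists (padd w v) => u hu; rewrite -paddA hw.
Qed.

Definition ltc A d (z z' : config A d) : Prop :=
  exists c, (enum_rank (z c) < enum_rank (z' c))%nat /\
            forall c', ltlex c' c -> z c' = z' c'.

Lemma ltc_irr A d (z : config A d) : ~ ltc z z.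
Proof. by case=> c [h _]; rewrite ltnn in h. Qed.

Lemma ltc_trans A d (z1 z2 z3 : config A d) : ltc z1 z2 -> ltc z2 z3 -> ltc z1 z3.
Proof.
case=> c1 [h1 e1] [c2 [h2 e2]].
have [e|ne] := eqVneq c1 c2.
  subst c2; by exists c1; split; [exact: ltn_trans h1 h2 | move=> c' l; rewrite e1 ?e2].
case: (ltlex_total (elimN eqP ne)) => l.
- exists c1; split; first by rewrite -(e2 c1 l).
  by move=> c' l'; rewrite e1 // e2 //; exact: ltlex_trans l' l.
- exists c2; split; first by rewrite (e1 c2 l).
  by move=> c' l'; rewrite e1 ?e2 //; exact: ltlex_trans l' l.
Qed.

Lemma ar1 (n : nat) (a : int) : (1 <= a) && (a <= n%:Z) -> (absz a <= n)%nat.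
Proof. lia. Qed.
Lemma ar2 (n N : nat) (z v : int) : (1 <= z) && (z <= n%:Z) -> (absz v <= N)%nat ->
  leq (absz (z + v)) (N + n)%nat.
Proof. lia. Qed.
Lemma ar3 (n K0 : nat) (ui u0i wi vi : int) :
  ((K0 + K0)%nat%:Z < u0i + wi - vi) && (u0i + wi - vi <= n%:Z - (K0 + K0)%nat%:Z) ->
  (absz ui <= K0)%nat -> (absz u0i <= K0)%nat ->
  (1 <= ui + wi - vi) && (ui + wi - vi <= n%:Z).
Proof. lia. Qed.

Section Key.
Variables (A : finType) (d : nat) (X : config A d -> Prop).
Variable F : seq (pattern A d).
Hypothesis HF : forall x, X x <-> (forall P, List.In P F -> ~ appears P x).
Variable K0 : nat.
Hypothesis HK : forall P0, List.In P0 F -> forall u, u \in psupp P0 -> inbox K0 u.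
Hypothesis Hmin : minimal X.
Variable n : nat.

Definition inC (u : pos d) : bool := [forall i, (1 <= u i) && (u i <= n%:Z)].
Definition intC (u : pos d) : bool :=
  [forall i, ((K0 + K0)%nat%:Z < u i) && (u i <= n%:Z - (K0 + K0)%nat%:Z)].

Lemma inC_box u : inC u -> inbox n u.
Proof. by move/forallP=> h; apply/forallP=> i; apply: ar1; exact: h. Qed.

Variables (x1 x2 : config A d).
Hypotheses (X1 : X x1) (X2 : X x2).
Hypothesis agree : forall u, inC u -> ~~ intC u -> x1 u = x2 u.
Variable c0 : pos d.
Hypotheses (c0C : inC c0) (c0r : (enum_rank (x1 c0) < enum_rank (x2 c0))%nat)
  (c0min : forall c, inC c -> ltlex c c0 -> x1 c = x2 c).

Definition Pp : pattern A d := Pattern (filter inC (cov d n)) x1.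

Lemma occPp y v : occurs Pp y v <-> forall u, inC u -> y (padd u v) = x1 u.
Proof.
split=> h u hu.
- by apply: h; rewrite mem_filter hu covP // inC_box.
- by move: hu; rewrite mem_filter => /andP[hu _]; apply: h.
Qed.

Section Fixed.
Variable N : nat.
Let M := (N + n)%nat.
Let sR := cov d M.
Let a0 := x1 [ffun=> 0].
Definition glue (q : (size sR).-tuple A) : config A d :=
  fun u => if inbox M u then nth a0 q (index u sR) else x1 u.

Lemma glue_map (y : config A d) : (forall u, ~~ inbox M u -> y u = x1 u) ->
  glue (map_tuple y (in_tuple sR)) = y.
Proof.
move=> hy; apply: functional_extensionality => u; rewrite /glue.
case: ifP => hu; last by rewrite hy ?hu.
rewrite /= (nth_map u); last by rewrite index_mem covP.
by rewrite nth_index // covP.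
Qed.

Lemma avoidN : exists y, X y /\ forall v, inbox N v -> ~ occurs Pp y v.
Proof.
have [q [Sq qmax]] : exists q, X (glue q) /\ forall q', X (glue q') -> ~ ltc (glue q) (glue q').
  apply: (@fin_max _ (fun q => X (glue q)) (fun q q' => ltc (glue q) (glue q'))).
  - by move=> t; exact: ltc_irr.
  - by move=> a b c; exact: ltc_trans.
  - by exists (map_tuple x1 (in_tuple sR)); rewrite glue_map.
set y := glue q.
have yout : forall u, ~~ inbox M u -> y u = x1 u by move=> u hu; rewrite /y /glue (negbTE hu).
exists y; split=> // v hv /occPp occ.
pose y' : config A d := fun u => if inC (psub u v) then x2 (psub u v) else y u.
have Xy' : X y'.
  apply/HF => P0 inF [w hw].
  have [[u0 [u0s u0i]]|nA] := classic (exists u0, u0 \in psupp P0 /\ intC (psub (padd u0 w) v)).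
  - move/HF: X2 => /(_ P0 inF); apply; exists (psub w v) => u hu.
    have hC : inC (psub (padd u w) v).
      apply/forallP=> i; rewrite psubE paddE.
      have := forallP u0i i; rewrite psubE paddE => h.
      apply: (ar3 h); [exact: (forallP (HK inF hu) i) | exact: (forallP (HK inF u0s) i)].
    rewrite -hw // /y' /=; case: ifP => [_|/negbT/negP []]; last exact: hC.
    congr x2; apply/ffunP=> i; by rewrite !(psubE, paddE) addrA.
  - move/HF: Sq => /(_ P0 inF); apply; exists w => u hu.
    rewrite -(hw u hu) /y' /=; case: ifP => // hC.
    have ni : ~~ intC (psub (padd u w) v) by apply/negP => hi; apply: nA; exists u.
    by rewrite -agree // -occ // padd_psub.
have ey' : glue (map_tuple y' (in_tuple sR)) = y'.
  apply: glue_map => u hu; rewrite /y'; case: ifP => hC; last exact: yout.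
  exfalso; move/negP: hu; apply; apply/forallP=> i.
  rewrite -(padd_psub u v) paddE; apply: ar2; [exact: (forallP hC i) | exact: (forallP hv i)].
apply: (qmax (map_tuple y' (in_tuple sR))); rewrite ey' //.
exists (padd c0 v); split.
  by rewrite /y' psub_padd c0C -/y occ.
move=> c' l; rewrite /y'; rewrite -/y; case: ifP => // hC.
rewrite -c0min //; last by apply: (@ltlex_unshift _ _ _ v); rewrite padd_psub.
by rewrite -occ // padd_psub.
Qed.

End Fixed.

Lemma key_false : False.
Proof.
case: (compactness HF avoidN) => y [Xy ny].
apply: ny; apply: (Hmin (P := Pp)) => //.
exists x1; split=> //; exists [ffun=> 0]; apply/occPp => u _; by rewrite padd0.
Qed.

End Key.


Lemma ar4 (a : int) : 1 <= a -> Posz ((absz a).-1).+1 = a.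
Proof. lia. Qed.
Lemma ar5 (n : nat) (a : int) : (1 <= a) && (a <= n%:Z) -> ((absz a).-1 < n)%nat.
Proof. lia. Qed.

Lemma inC_emb d n (b : box d n) : inC n (box_emb b).
Proof. apply/forallP=> i; rewrite ffunE. apply/andP; split; first by []. by rewrite lez_nat ltn_ord. Qed.

Lemma emb_inC d n (u : pos d) : inC n u -> exists b : box d n, u = box_emb b.
Proof.
move/forallP=> h.
exists [ffun i => Ordinal (ar5 (h i))].
apply/ffunP=> i; rewrite !ffunE /=. rewrite ar4 //. by case/andP: (h i).
Qed.

Definition Nset A d (X : config A d -> Prop) n :=
  [set p : {ffun box d n -> A} |
      asb (exists x, X x /\ exists v : pos d,
             forall b : box d n, x (padd (box_emb b) v) = p b)].

Section Rigid.
Variables (A : finType) (d : nat) (X : config A d -> Prop).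
Variable F : seq (pattern A d).
Hypothesis HF : forall x, X x <-> (forall P, List.In P F -> ~ appears P x).
Variable K0 : nat.
Hypothesis HK : forall P0, List.In P0 F -> forall u, u \in psupp P0 -> inbox K0 u.
Hypothesis Hmin : minimal X.
Variable n : nat.

Lemma rigid (p1 p2 : {ffun box d n -> A}) : p1 \in Nset X n -> p2 \in Nset X n ->
  (forall b, ~~ intC K0 n (box_emb b) -> p1 b = p2 b) -> p1 = p2.
Proof.
rewrite !inE => /asbP [x1 [X1 [v1 h1]]] /asbP [x2 [X2 [v2 h2]]] hb.
pose y1 := fun u => x1 (padd u v1).
pose y2 := fun u => x2 (padd u v2).
have Y1 : X y1 by apply: shift_X HF _ _ X1.
have Y2 : X y2 by apply: shift_X HF _ _ X2.
have ag : forall u, inC n u -> ~~ intC K0 n u -> y1 u = y2 u.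
  move=> u /emb_inC [b ->] hi; by rewrite /y1 /y2 h1 h2 hb.
suff H : forall u, inC n u -> y1 u = y2 u.
  by apply/ffunP=> b; rewrite -h1 -h2; exact: (H _ (inC_emb b)).
apply: NNPP => /not_all_ex_not [u0 hu0].
have [c0 [c0s [c0C c0ne] c0m]] := @seq_min d (cov d n) (fun u => inC n u /\ y1 u <> y2 u)
  (ex_intro _ u0 (conj (covP (inC_box (proj1 (imply_to_and _ _ hu0)))) (imply_to_and _ _ hu0))).
have mn : forall c, inC n c -> ltlex c c0 -> y1 c = y2 c.
  move=> c cC l; apply: NNPP => ne; apply: (c0m c) => //; exact: covP (inC_box cC).
have : enum_rank (y1 c0) != enum_rank (y2 c0).
  by apply/negP => /eqP /enum_rank_inj.
rewrite neq_ltn => /orP[r|r].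
- exact: (key_false HF HK Hmin Y1 Y2 ag c0C r mn).
- apply: (key_false HF HK Hmin Y2 Y1 _ c0C r) => [u uC ui|c cC l].
  + by rewrite ag.
  + by rewrite mn.
Qed.

End Rigid.

Lemma count_bound A d (X : config A d -> Prop) F
  (HF : forall x, X x <-> (forall P, List.In P F -> ~ appears P x)) K0
  (HK : forall P0, List.In P0 F -> forall u, u \in psupp P0 -> inbox K0 u)
  (Hmin : minimal X) n :
  (#|Nset X n| <= expn #|A| #|[set b : box d n | ~~ intC K0 n (box_emb b)]|)%nat.
Proof.
set bnd := [set b : box d n | _].
pose r (p : {ffun box d n -> A}) : {ffun {b : box d n | b \in bnd} -> A} :=
  [ffun b => p (val b)].
have inj : {in Nset X n &, injective r}.
  move=> p1 p2 h1 h2 e; apply: (rigid HF HK Hmin h1 h2) => b hb.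
  have bb : b \in bnd by rewrite inE.
  by move/ffunP: e => /(_ (exist _ b bb)); rewrite !ffunE.
rewrite -(card_in_imset inj).
apply: leq_trans (max_card _) _.
rewrite card_ffun card_sig; apply: eq_leq; congr expn; exact: eq_card.
Qed.

Lemma ar6 (K n : nat) (j : nat) : (j < n)%nat ->
  ~~ ((K%:Z < Posz j.+1) && (Posz j.+1 <= n%:Z - K%:Z)) ->
  if (j.+1 <= K)%nat then (j <= K)%nat else (n - j.+1 <= K)%nat.
Proof. case: ifP; lia. Qed.

Lemma bnd_bound d K n :
  (#|[set b : box d n | ~~ intC K n (box_emb b)]| <= d * ((K+K).+1 * 2 * expn n d.-1))%nat.
Proof.
pose B (i : 'I_d) := [set b : box d n | ~~ (((K+K)%nat%:Z < Posz (b i).+1) && (Posz (b i).+1 <= n%:Z - (K+K)%nat%:Z))].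
have sub : [set b : box d n | ~~ intC K n (box_emb b)] \subset \bigcup_i B i.
  apply/subsetP=> b; rewrite inE negb_forall => /existsP [i hi].
  apply/bigcupP; exists i => //; rewrite inE; move: hi; by rewrite ffunE.
apply: leq_trans (subset_leq_card sub) _.
have cu : (#|\bigcup_i B i| <= \sum_i #|B i|)%nat.
  rewrite /index_enum; elim: (Finite.enum _) => [|a l IH]; first by rewrite !big_nil cards0.
  rewrite !big_cons; apply: leq_trans (leq_of_leqif (leq_card_setU _ _)) _.
  exact: leq_add.
apply: leq_trans cu _.
rewrite -[X in (_ <= X * _)%nat](card_ord d) -sum_nat_const.
apply: leq_sum => i _.
pose g (j : 'I_n) : 'I_(K+K).+1 * bool :=
  if (j.+1 <= K+K)%nat then (inord j, true) else (inord (n - j.+1), false).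
pose f (b : box d n) : ('I_(K+K).+1 * bool) * {ffun {j : 'I_d | j != i} -> 'I_n} :=
  (g (b i), [ffun j => b (val j)]).
have inj : {in B i &, injective f}.
  move=> b1 b2; rewrite !inE => h1 h2 [eg er].
  apply/ffunP=> j; have [->|nj] := eqVneq j i; last first.
    by move/ffunP: er => /(_ (exist _ j nj)); rewrite !ffunE.
  have a1 := ar6 (ltn_ord (b1 i)) h1; have a2 := ar6 (ltn_ord (b2 i)) h2.
  apply: val_inj => /=; move: eg a1 a2; rewrite /g.
  case: ifP => c1; case: ifP => c2 // [e] a1 a2.
  + have s1 : (b1 i < (K+K).+1)%nat by move: a1; rewrite ?c1 ?ltnS.
    have s2 : (b2 i < (K+K).+1)%nat by move: a2; rewrite ?c2 ?ltnS.
    by move/(congr1 val): e; rewrite /= !inordK.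
  + have s1 : (n - (b1 i).+1 < (K+K).+1)%nat by move: a1; rewrite ?c1 ?ltnS.
    have s2 : (n - (b2 i).+1 < (K+K).+1)%nat by move: a2; rewrite ?c2 ?ltnS.
    move/(congr1 val): e; rewrite /= !inordK // => e.
    have key : forall x y : nat, (x < n)%nat -> (y < n)%nat -> (n - x.+1 = n - y.+1)%nat -> x = y by move=> x y; lia.
    exact: key (ltn_ord _) (ltn_ord _) e.
rewrite -(card_in_imset inj); apply: leq_trans (max_card _) _.
rewrite card_prod card_prod card_ffun card_ord card_bool card_sig card_ord.
by rewrite cardC1 card_ord.
Qed.

Lemma supp_bound A d (F : seq (pattern A d)) :
  exists K0, forall P0, List.In P0 F -> forall u, u \in psupp P0 -> inbox K0 u.
Proof.
elim: F => [|P F [K hK]]; first by exists 0%nat.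
case: (seq_inbox (psupp P)) => m hm.
exists (maxn K m) => P0 /= [<-|inF] u hu.
- apply: inbox_mono (hm _ hu); exact: leq_maxr.
- apply: inbox_mono (hK _ inF _ hu); exact: leq_maxl.
Qed.

Lemma comb_bound A d (X : config A d -> Prop) : is_SFT X -> minimal X ->
  exists B, forall n, (Npat X n <= expn (maxn 1 #|A|) (muln B (expn n d.-1)))%nat.
Proof.
case=> F HF Hmin.
case: (supp_bound F) => K0 HK.
exists (muln d ((K0+K0).+1 * 2))%nat => n.
have -> : Npat X n = #|Nset X n| by [].
apply: leq_trans (count_bound HF HK Hmin n) _.
set e := #|_|.
apply: (@leq_trans (expn (maxn 1 #|A|) e)).
  case: e => [|e]; first by rewrite !expn0.
  by rewrite leq_exp2r // leq_maxr.
apply: leq_pexp2l; first by rewrite leq_maxl.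
apply: leq_trans (bnd_bound d K0 n) _.
by rewrite mulnA.
Qed.

End H1.

Module H2.
Import ssreflect ssrbool ssrnat zify.
Import Reals Lra Lia ZArith.
Import Defs.
Open Scope R_scope.

Lemma ln_nonpos x : x <= 0 -> ln x = 0.
Proof. intros h. cbv delta [ln] beta. destruct (Rlt_dec 0 x); [exfalso; lra | reflexivity]. Qed.

Lemma ln_le x y : 0 < x -> x <= y -> ln x <= ln y.
Proof. intros hx [h|h]; [left; apply ln_increasing; auto | subst; lra]. Qed.

Lemma ln_gt_0 x : 1 < x -> 0 < ln x.
Proof. intros h. rewrite <- ln_1. apply ln_increasing; lra. Qed.

Lemma ln2_pos : 0 < ln 2.
Proof. apply ln_gt_0; lra. Qed.

Lemma log2_le x y : 0 < x -> x <= y -> log2 x <= log2 y.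
Proof.
intros hx hxy. unfold log2, Rdiv. apply Rmult_le_compat_r.
- left; apply Rinv_0_lt_compat, ln2_pos.
- apply ln_le; auto.
Qed.

Lemma real_part (d a B : nat) (N : nat -> nat) : (1 <= d)%nat -> (1 <= a)%nat ->
  (forall n, INR (N n) <= INR a ^ (B * Nat.pow n (Nat.pred d))) ->
  limsup_le (fun n => (log2 (log2 (INR (N n))) / log2 (INR n))%R) (INR d - 1).
Proof.
intros hd ha HN eps heps.
set (c := INR B * log2 (INR a)).
set (T := Rabs (log2 c)).
set (M := ln 2 * T / eps).
destruct (archimed (exp M)) as [hup _].
exists (Z.to_nat (up (exp M)) + 2)%nat.
intros n hn.
assert (hn' : (Z.to_nat (up (exp M)) + 2 <= n)%coq_nat) by lia.
assert (hn2 : 2 <= INR n).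
{ replace 2 with (INR 2) by (simpl; ring). apply le_INR; lia. }
assert (hnM : exp M <= INR n).
{ apply Rle_trans with (IZR (up (exp M))); [lra|].
  assert (h0 : 0 <= IZR (up (exp M))) by (pose proof (exp_pos M); lra).
  assert (hz : (0 <= up (exp M))%Z) by (apply le_IZR; lra).
  rewrite -(Z2Nat.id (up (exp M)) hz).
  rewrite -INR_IZR_INZ. apply le_INR. lia. }
assert (hlnn : M <= ln (INR n)).
{ rewrite -(ln_exp M). apply ln_le; [apply exp_pos | exact hnM]. }
assert (hlog2n : 0 < log2 (INR n)).
{ unfold log2. apply Rdiv_lt_0_compat; [apply ln_gt_0; lra | apply ln2_pos]. }
assert (hpd : INR d = INR (Nat.pred d) + 1).
{ rewrite -S_INR. f_equal. lia. }
assert (hd1 : 0 <= INR (Nat.pred d)) by apply pos_INR.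
set (l := log2 (INR n)).
assert (hT : T <= eps * l).
{ assert (h1 : M * eps = ln 2 * T) by (unfold M; field; lra).
  assert (h2 : ln 2 * T <= ln (INR n) * eps).
  { rewrite -h1. apply Rmult_le_compat_r; lra. }
  unfold l, log2.
  apply Rmult_le_reg_l with (ln 2); [apply ln2_pos|].
  replace (ln 2 * (eps * (ln (INR n) / ln 2))) with (ln (INR n) * eps)
    by (field; apply Rgt_not_eq, ln2_pos).
  exact h2. }
set (L := log2 (INR (N n))).
destruct (Rle_or_lt L 0) as [hL | hL].
- unfold log2 at 1. rewrite (ln_nonpos _ hL). unfold Rdiv. rewrite Rmult_0_l Rmult_0_l.
  assert (0 <= T) by apply Rabs_pos. nra.
- assert (hNpos : 0 < INR (N n)).
  { destruct (Rle_or_lt (INR (N n)) 0) as [h|h]; auto.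
    exfalso. unfold L, log2 in hL. rewrite (ln_nonpos _ h) in hL. unfold Rdiv in hL. lra. }
  assert (hapos : 0 < INR a) by (replace 0 with (INR 0) by reflexivity; apply lt_INR; lia).
  assert (hL2 : L <= c * INR n ^ (Nat.pred d)).
  { unfold L. apply Rle_trans with (log2 (INR a ^ (B * Nat.pow n (Nat.pred d)))).
    - apply log2_le; auto.
    - unfold log2, Rdiv. rewrite ln_pow; auto. rewrite mult_INR pow_INR.
      unfold c, log2, Rdiv. lra. }
  assert (hnp : 0 < INR n ^ Nat.pred d) by (apply pow_lt; lra).
  assert (hc : 0 < c).
  { destruct (Rle_or_lt c 0) as [h|h]; auto. exfalso. nra. }
  assert (h3 : log2 L <= log2 c + INR (Nat.pred d) * l).
  { apply Rle_trans with (log2 (c * INR n ^ Nat.pred d)).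
    - apply log2_le; auto.
    - unfold log2, Rdiv. rewrite ln_mult; auto. rewrite ln_pow; [|lra].
      unfold l, log2, Rdiv. lra. }
  assert (h4 : log2 c <= T) by apply Rle_abs.
  assert (h5 : log2 L <= (INR d - 1 + eps) * l) by nra.
  unfold Rdiv. fold l.
  apply Rle_trans with ((INR d - 1 + eps) * l * / l).
  + apply Rmult_le_compat_r; [left; apply Rinv_0_lt_compat; exact hlog2n | exact h5].
  + right. field. apply Rgt_not_eq. exact hlog2n.
Qed.

Lemma expn_pow m k : expn m k = Nat.pow m k.
Proof. elim: k => [|k IH]; first by rewrite expn0. by rewrite expnS IH mulnE. Qed.

Lemma bridge (a B n d : nat) :
  INR (expn a (muln B (expn n d.-1))) = INR a ^ (B * Nat.pow n (Nat.pred d)).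
Proof. by rewrite !expn_pow mulnE pow_INR. Qed.

End H2.

Theorem mainTheorem3 (A : finType) (d : nat) (X : config A d -> Prop) :
  (1 <= d)%N -> is_SFT X -> minimal X ->
  upper_entropy_dim_le X (INR d - 1)%R.
Proof.
move=> hd hS hm.
case: (H1.comb_bound hS hm) => B HB.
apply: (@H2.real_part d (maxn 1 #|A|) B (Npat X)) => //.
- by rewrite leq_maxl.
- move=> n; rewrite -H2.bridge; apply: le_INR; apply/leP; exact: HB.
Qed.
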